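(* Let $\beta,\lambda\ge0$ with $\lambda+\beta>0$, let $\gamma\ge 0$ and $x\in\mathbb{R}$ with $x^2\le\gamma^2$, and let $f(\lambda)=\frac{\lambda\beta}{\lambda+\beta}+x^2$. Then (1) $f(\lambda)\le\beta+\gamma^2$; (2) $f(\lambda)\le\lambda+\gamma^2$; (3) $f(\lambda)\le\max\Big\{\lambda,\ \frac{3\gamma^2+\sqrt{\gamma^4+4\gamma^2\beta}}{2}\Big\}$. *)

(* Defs.v *)
From Stdlib Require Import Reals.
Open Scope R_scope.

Definition f_lemma6 (beta x lam : R) : R := lam * beta / (lam + beta) + x ^ 2.

(* Main.v *)
Require Import Defs.
From Stdlib Require Import Reals Lra Psatz.
Open Scope R_scope.

Theorem lemma6 (beta lam gamma x : R)
  (hbeta : 0 <= beta) (hlam : 0 <= lam) (hsum : 0 < lam + beta)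
  (hgamma : 0 <= gamma) (hx : x ^ 2 <= gamma ^ 2) :
  f_lemma6 beta x lam <= beta + gamma ^ 2 /\
  f_lemma6 beta x lam <= lam + gamma ^ 2 /\
  f_lemma6 beta x lam <=
    Rmax lam ((3 * gamma ^ 2 + sqrt (gamma ^ 4 + 4 * gamma ^ 2 * beta)) / 2).
Proof.
  unfold f_lemma6.
  set (t := lam * beta / (lam + beta)).
  assert (Ht : t * (lam + beta) = lam * beta) by (unfold t; field; lra).
  assert (Ht0 : 0 <= t) by (unfold t; apply Rmult_le_pos; [nra| apply Rlt_le, Rinv_0_lt_compat; lra]).
  assert (Htl : t <= lam) by nra.
  assert (Htb : t <= beta) by nra.
  assert (Hx0 : 0 <= x ^ 2) by nra.
  split; [lra|]. split; [lra|].
  set (y := t + x ^ 2).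
  destruct (Rle_or_lt y lam) as [Hy|Hy].
  { apply Rle_trans with lam; [exact Hy| apply Rmax_l]. }
  apply Rle_trans with (2 := Rmax_r _ _).
  set (D := gamma ^ 4 + 4 * gamma ^ 2 * beta).
  assert (HD : 0 <= D) by (unfold D; nra).
  pose proof (sqrt_pos D) as Hs0.
  pose proof (sqrt_sqrt D HD) as Hs.
  set (s := sqrt D) in *.
  assert (H1 : t * (y + beta) <= y * beta) by nra.
  assert (H2 : (y - gamma ^ 2) * (y + beta) <= y * beta).
  { assert (y - gamma^2 <= t) by (unfold y; lra). nra. }
  assert (H3 : y <= (gamma ^ 2 + s) / 2).
  { destruct (Rle_or_lt (2*y - gamma^2) s) as [H|H]; [lra|].
    exfalso. assert (s*s < (2*y-gamma^2)*(2*y-gamma^2)) by nra.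
    unfold D in Hs. nra. }
  assert (0 <= gamma ^ 2) by nra.
  lra.
Qed.
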